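(* Let $P$ be a priority forest on $[n]_0$ with $m$ edges, and let $C$ be a maximal chain of $[\hat0,P]$ with Jordan–Hölder permutation $\lambda(C)$. Then $F_C(P)$, the ordered forest obtained from $P$ by relabeling each non-root vertex $v$ by $\lambda(C)^{-1}(v)$ and marking the root of the $k$-th component tree by $\circ_k$ (with $\circ_0=\circ$), is the unique ordered forest with priority traversal $\lambda(C)^{-1}$ and priority forest $P$.
   Context: $[n]=\{1,\dots,n\}$, $[n]_0=\{0,\dots,n\}$. A priority forest on $[n]_0$ is a rooted forest with vertex set $[n]_0$ whose component trees $T_0,T_1,\dots$ are increasing (each non-root vertex has a larger label than its parent) and satisfy: for $j<k$ every label of $T_j$ is smaller than every label of $T_k$. $\Pi(n)$ is the poset of priority forests on $[n]_0$ ordered by inclusion of edge sets, with an extra top element; $\hat0$ is the edgeless forest. For priority forests $Q\lessdot Q'$ (one edge added), $\lambda(Q,Q')$ is the larger endpoint of the edge in $E(Q')\setminus E(Q)$. A maximal chain $C:\hat0=P_0\lessdot\cdots\lessdot P_m=P$ has Jordan–Hölder permutation $\lambda(C):[m]\to[n]$, $i\mapsto\lambda(P_{i-1},P_i)$, which is injective; $\lambda(C)^{-1}:[n]\to[m]$ is the partial permutation defined on its image. An ordered $(m,n)$-forest is a rooted forest with $n+1$ nodes and $m$ edges whose component trees $T_0,\dots,T_{n-m}$ are totally ordered, with unlabeled roots marked $\circ,\circ_1,\dots,\circ_{n-m}$, and non-root vertices labeled bijectively by $[m]$. Priority search: initially only the children of $\circ$ are unblocked; at each step visit the unblocked unvisited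 node with the smallest label and unblock its children; when a tree is exhausted, move to the next tree, visit its root and unblock its children. Steps are numbered $1,\dots,n$ (the visit of $\circ$ is not counted). The priority traversal is the partial permutation $[n]\to[m]$ sending step $i$ to the label of the node visited at step $i$, undefined when that node is a root. The priority forest is obtained by relabeling each node by its visiting step, with $\circ$ labeled $0$. *)

(* Defs.v *)
From mathcomp Require Import all_boot.
Set Implicit Arguments. Unset Strict Implicit. Unset Printing Implicit Defensive.

(* Priority forests on [n]_0 = {0,...,n}, encoded by a parent function. *)
(* P v = Some p  means that (p, v) is an edge with p the parent of v;  *)
(* P v = None    means that v is a root.                               *)
Definition Forest (n : nat) := {ffun 'I_n.+1 -> option 'I_n.+1}.

Section PriorityForests.
Variable n : nat.
Implicit Types P Q : Forest n.

Definition edges P : {set 'I_n.+1 * 'I_n.+1} := [set e | P e.2 == Some e.1].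

Definition up P (v : 'I_n.+1) : 'I_n.+1 := odflt v (P v).
Definition rootF P (v : 'I_n.+1) : 'I_n.+1 := iter n (up P) v.

Definition priority_forest P : Prop :=
  (forall (v p : 'I_n.+1), P v = Some p -> p < v) /\
  (forall u v : 'I_n.+1, rootF P u < rootF P v -> u < v).

Definition edgeless : Forest n := [ffun _ => None].

Definition covers Q Q' : bool :=
  (edges Q \subset edges Q') && (#|edges Q' :\: edges Q| == 1).

Definition jh_label Q Q' : nat :=
  if [pick e in edges Q' :\: edges Q] is Some e then maxn e.1 e.2 else 0.

Definition max_chain (P : Forest n) (m : nat) (C : nat -> Forest n) : Prop :=
  [/\ C 0 = edgeless, C m = P,
      (forall i, i <= m -> priority_forest (C i)) &
      (forall i, i < m -> covers (C i) (C i.+1))].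

Definition lam (C : nat -> Forest n) (i : nat) : nat := jh_label (C i.-1) (C i).

Definition lamInv (C : nat -> Forest n) (m : nat) (v : nat) : option nat :=
  omap (fun i : 'I_m => i.+1) [pick i : 'I_m | lam C i.+1 == v].

End PriorityForests.

(* Nodes: roots  inl k  (k : 'I_(n-m).+1), marked o_k (o_0 = o), the   *)
(* order of the trees being the order of k; non-root nodes  inr j       *)
(* (j : 'I_m), carrying the label j+1 in [m].                           *)
(* An ordered forest is given by the parent of each non-root node.      *)
Definition onode (n m : nat) := ('I_(n - m).+1 + 'I_m)%type.
Definition OForest (n m : nat) := {ffun 'I_m -> onode n m}.

Section OrderedForests.
Variables n m : nat.
Implicit Types F : OForest n m.

Definition oup F (x : onode n m) : onode n m :=
  match x with inl k => inl k | inr j => F j end.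

(* acyclicity: every non-root node reaches a root *)
Definition ordered_forest F : Prop :=
  forall j : 'I_m, exists k, iter m (oup F) (inr j) = inl k.

Definition ochildren F (x : onode n m) : seq 'I_m :=
  [seq j <- enum 'I_m | F j == x].

Definition minlab (x : 'I_m) (s : seq 'I_m) : 'I_m :=
  foldr (fun a b => if val a < val b then a else b) x s.

(* priority search inside one tree: [frontier] is the list of unblocked
   unvisited nodes; visit the smallest label, unblock its children *)
Fixpoint psearch F (fuel : nat) (frontier : seq 'I_m) : seq 'I_m :=
  match fuel with
  | 0 => [::]
  | fuel'.+1 =>
    match frontier with
    | [::] => [::]
    | x :: s => let y := minlab x s in
                y :: psearch F fuel' (rem y frontier ++ ochildren F (inr y))
    end
  end.

(* full visiting sequence: for each tree in order, its root followed by the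
   priority search of the tree; index 0 is the visit of o (not a step),
   index i (1 <= i <= n) is step i *)
Definition visit_seq F : seq (onode n m) :=
  flatten [seq inl k :: map inr (psearch F m (ochildren F (inl k)))
          | k <- enum 'I_(n - m).+1].

Definition traversal F (i : nat) : option nat :=
  match nth (inl ord0) (visit_seq F) i with
  | inr j => Some j.+1
  | inl _ => None
  end.

Definition step F (x : onode n m) : 'I_n.+1 := inord (index x (visit_seq F)).

Definition oprio F : Forest n :=
  [ffun v : 'I_n.+1 =>
     match nth (inl ord0) (visit_seq F) v with
     | inr j => Some (step F (F j))
     | inl _ => None
     end].

End OrderedForests.

(* F_C(P): relabel each non-root vertex v of P by lambda(C)^{-1}(v), and mark
   the root of the k-th component tree (trees ordered by their labels) by o_k *)
Definition FC (n m : nat) (P : Forest n) (C : nat -> Forest n) : OForest n m :=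
  [ffun j : 'I_m =>
     let p := odflt ord0 (P (inord (lam C j.+1))) in
     if P p is Some _ then inr (insubd j (odflt 0 (lamInv C m p)).-1)
     else inl (inord #|[set r : 'I_n.+1 | (P r == None) && (r < p)]|)].

(* Main.v *)
Require Import Defs.
From mathcomp Require Import all_boot zify.
Set Implicit Arguments. Unset Strict Implicit. Unset Printing Implicit Defensive.

Section Proof.
Variables (n m : nat) (P : Forest n) (C : nat -> Forest n).
Hypothesis hP : priority_forest P.
Hypothesis hC : max_chain P m C.

Lemma step_spec i : i < m -> exists x : 'I_n.+1,
  [/\ C i x = None, C i.+1 x != None, (forall u, u != x -> C i.+1 u = C i u)
    & lam C i.+1 = x].
Proof.
move=> lt; case: hC => C0 Cm PF CV.
have /andP[sub /cards1P[e de]] := CV i lt.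
have einE: e \in edges (C i.+1) :\: edges (C i) by rewrite de set11.
move: (einE); rewrite !inE => /andP[ni /eqP ei].
have e12 : e.1 < e.2 by have [H _] := PF i.+1 lt; exact: H _ _ ei.
exists e.2; split.
- case E: (C i e.2) => [p|] //.
  have: (p, e.2) \in edges (C i) by rewrite inE E.
  move/(subsetP sub); rewrite inE /= ei => /eqP[pE].
  by rewrite E pE eqxx in ni.
- by rewrite ei.
- move=> u ne; case E: (C i.+1 u) => [p|].
    case Hin: ((p, u) \in edges (C i)); first by rewrite inE /= in Hin; rewrite (eqP Hin).
    have: (p, u) \in [set e] by rewrite -de inE Hin inE /= E.
    by rewrite inE => /eqP pe; rewrite -pe eqxx in ne.
  case E': (C i u) => [p|] //.
  have: (p, u) \in edges (C i) by rewrite inE E'.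
  by move/(subsetP sub); rewrite inE /= E.
- rewrite /lam /jh_label /=; case: pickP => [e' | ].
    rewrite de inE => /eqP ->; exact/maxn_idPr/ltnW.
  by move/(_ e); rewrite einE.
Qed.

Lemma mono a b (u : 'I_n.+1) p : a <= b <= m -> C a u = Some p -> C b u = Some p.
Proof.
elim: b => [|b IH] /andP[ab bm] Ca; first by move: ab; rewrite leqn0 => /eqP <-.
move: ab; rewrite leq_eqVlt => /orP[/eqP <- //| ab].
have Cb := IH (introT andP (conj ab (ltnW bm))) Ca.
have [x [Cx _ Cu _]] := step_spec bm.
case: (eqVneq u x) => [ux|ne]; first by rewrite ux Cx in Cb.
by rewrite Cu.
Qed.

Lemma stay a b (u : 'I_n.+1) : a <= b <= m -> (forall i, a < i <= b -> lam C i != u) ->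
  C b u = C a u.
Proof.
elim: b => [|b IH] /andP[ab bm] H; first by move: ab; rewrite leqn0 => /eqP <-.
move: ab; rewrite leq_eqVlt => /orP[/eqP <- //| ab].
have [x [Cx _ Cu lx]] := step_spec bm.
have hb : a < b.+1 <= b.+1 by rewrite ab leqnn.
rewrite Cu; last first.
  by apply: contra (H b.+1 hb) => /eqP ->; rewrite lx.
apply: IH; first by apply/andP; split; [exact: ab | exact: ltnW].
move=> i /andP[ai ib]; apply: H; rewrite ai; exact: leqW.
Qed.

Lemma lam_props i : 0 < i <= m -> exists x : 'I_n.+1,
  [/\ lam C i = x, C i.-1 x = None, C i x != None & P x = C i x].
Proof.
case: i => [//|i] /= im.
have [x [Cx Cx' _ lx]] := step_spec im.
exists x; split => //.
case E: (C i.+1 x) Cx' => [p|] // _.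
have [_ Cm _ _] := hC.
by rewrite -Cm; apply: (mono (a := i.+1)); rewrite ?leqnn ?im.
Qed.

Lemma lam_inj i j : 0 < i <= m -> 0 < j <= m -> lam C i = lam C j -> i = j.
Proof.
wlog: i j / i <= j.
  move=> W Hi Hj e; case: (leqP i j) => ij; first exact: W.
  by symmetry; apply: W => //; exact: ltnW.
rewrite leq_eqVlt => /orP[/eqP//|ij] Hi Hj e.
have [x [lx _ Cx _]] := lam_props Hi.
have [y [ly Cy _ _]] := lam_props Hj.
have xy : x = y by apply: ord_inj; rewrite -lx -ly.
case E: (C i x) Cx => [p|] // _.
have : C j.-1 x = Some p.
  apply: (mono (a := i)) E.
  move: Hj ij => /andP[j0 jm] ij.
  apply/andP; split; lia.
by rewrite xy Cy.
Qed.


Definition lblo (v : nat) : option 'I_m := [pick i : 'I_m | lam C i.+1 == v].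
Definition rt (v : nat) : bool := P (inord v) == None.
Definition cnt (v : nat) : nat := count rt (iota 0 v).
Definition phin (v : nat) : onode n m :=
  if lblo v is Some i then inr i else inl (inord (cnt v)).
Definition vert (j : 'I_m) : 'I_n.+1 := inord (lam C j.+1).
Definition par (j : 'I_m) : 'I_n.+1 := odflt ord0 (P (vert j)).

Lemma lbloS v i : lblo v = Some i -> lam C i.+1 = v.
Proof. by rewrite /lblo; case: pickP => // j /eqP e [<-]. Qed.

Lemma lam_le (i : 'I_m) : lam C i.+1 <= n.
Proof.
have [x [lx _ _ _]] := lam_props (i := i.+1) (ltn_ord i).
by rewrite lx -ltnS ltn_ord.
Qed.

Lemma vertE j : vert j = lam C j.+1 :> nat.
Proof. by rewrite /vert inordK // ltnS lam_le. Qed.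

Lemma vert_nonroot j : P (vert j) != None.
Proof.
have [x [lx _ Cx Px]] := lam_props (i := j.+1) (ltn_ord j).
have -> : vert j = x by apply: ord_inj; rewrite vertE.
by rewrite Px.
Qed.

Lemma Ppar j : P (vert j) = Some (par j).
Proof. by rewrite /par; case: (P (vert j)) (vert_nonroot j). Qed.

Lemma par_lt j : par j < lam C j.+1.
Proof. by rewrite -vertE; apply: hP.1; exact: Ppar. Qed.

Lemma lamI (i j : 'I_m) : lam C i.+1 = lam C j.+1 -> i = j.
Proof.
by move=> e; apply: ord_inj; apply/eq_add_S; apply: lam_inj e; rewrite /= ltn_ord.
Qed.

Lemma lblo_lam (i : 'I_m) : lblo (lam C i.+1) = Some i.
Proof.
rewrite /lblo; case: pickP => [j /eqP e|]; first by rewrite (lamI e).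
by move/(_ i); rewrite eqxx.
Qed.

Lemma lbloP (u : 'I_n.+1) : (lblo u == None) = (P u == None).
Proof.
rewrite /lblo; case: pickP => [i /eqP li | none].
  have [x [lx _ Cx Px]] := lam_props (i := i.+1) (ltn_ord i).
  have -> : u = x by apply: ord_inj; rewrite -li lx.
  by rewrite Px (negbTE Cx).
have [C0 Cm _ _] := hC.
rewrite eqxx -Cm (stay (a := 0)) ?C0 ?ffunE //.
  by rewrite leqnn.
move=> [//|i] /andP[_ im]; have := none (Ordinal im); by move/negbT.
Qed.

Lemma lblo_rt v : v <= n -> (lblo v == None) = rt v.
Proof. by move=> vn; rewrite /rt -lbloP inordK. Qed.

Lemma up_le (Q : Forest n) : priority_forest Q -> forall x, up Q x <= x.
Proof. by move=> hQ x; rewrite /up; case E: (Q x) => [p|] //=; apply: ltnW (hQ.1 _ _ E). Qed.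

Lemma iter_up_le (Q : Forest n) k x : priority_forest Q -> iter k (up Q) x <= x.
Proof.
move=> hQ; elim: k => [//|k IH] /=; exact: leq_trans (up_le hQ _) IH.
Qed.

Lemma rootF_le (Q : Forest n) (w q : 'I_n.+1) : priority_forest Q -> Q w = Some q ->
  rootF Q w <= q.
Proof.
move=> hQ Qw; rewrite /rootF.
have n0 : 0 < n.
  have := hQ.1 _ _ Qw; have := ltn_ord w; rewrite ltnS; lia.
have -> : iter n (up Q) w = iter n.-1 (up Q) (up Q w) by rewrite -iterSr prednK.
have -> : up Q w = q by rewrite /up Qw.
exact: iter_up_le.
Qed.

Lemma rootF_root (Q : Forest n) (r : 'I_n.+1) : Q r = None -> rootF Q r = r.
Proof. by move=> Qr; rewrite /rootF iter_fix // /up Qr. Qed.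

Lemma treeT (w r q : 'I_n.+1) : P w = Some q -> P r = None -> q < r -> w < r.
Proof.
move=> Pw Pr qr; apply: hP.2.
rewrite (rootF_root Pr); exact: leq_ltn_trans (rootF_le hP Pw) qr.
Qed.

Lemma root0 : P ord0 = None.
Proof. by case E: (P ord0) => [p|] //; have := hP.1 _ _ E. Qed.

Lemma rt0 : rt 0.
Proof. by rewrite /rt (_ : inord 0 = ord0) ?root0 //; apply: ord_inj; rewrite inordK. Qed.

Lemma order (i j : 'I_m) : par j < lam C i.+1 -> lam C i.+1 < lam C j.+1 -> i < j.
Proof.
move=> pj lij; rewrite ltnNge; apply/negP => ji.
have [C0 Cm PF _] := hC.
have ne : i != j by apply: contraTneq lij => ->; rewrite ltnn.
have {ne} ji' : j < i by rewrite ltn_neqAle eq_sym ne ji.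
have hQ := PF j.+1 (ltn_ord j).
clear ji; rename ji' into ji.
have [x [lx Cx _ _]] := lam_props (i := i.+1) (ltn_ord i).
have [y [ly _ Cy Py]] := lam_props (i := j.+1) (ltn_ord j).
have Qy : C j.+1 y = Some (par j).
  have yv : y = vert j by apply: ord_inj; rewrite vertE.
  by rewrite -Ppar -yv Py.
have Qx : C j.+1 x = None.
  case E: (C j.+1 x) => [p|] //.
  have := mono (b := i) _ E; rewrite Cx => -> //.
  by rewrite ji /= ltnW.
have := hQ.2 y x; rewrite (rootF_root Qx) -lx -ly => H.
have : lam C j.+1 < lam C i.+1.
  by apply: H; exact: leq_ltn_trans (rootF_le hQ Qy) pj.
lia.
Qed.

Lemma card_count_ord k (q : 'I_k -> bool) : #|[set x | q x]| = count q (enum 'I_k).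
Proof. rewrite cardE /enum_mem size_filter count_filter. apply: eq_count => x. by rewrite !inE andbT. Qed.

Lemma cnt_card r : r <= n.+1 ->
  cnt r = #|[set x : 'I_n.+1 | (P x == None) && (x < r)]|.
Proof.
move=> rn; rewrite card_count_ord.
rewrite (eq_count (a2 := preim val (fun i => rt i && (i < r)))); last first.
  by move=> x /=; rewrite /rt inord_val.
rewrite -count_map val_enum_ord -(subnKC rn) iotaD count_cat.
rewrite (eq_in_count (a2 := rt)); last by move=> i; rewrite mem_iota => /andP[_ ->]; rewrite andbT.
rewrite (eq_in_count (a1 := fun i => rt i && (i < r)) (a2 := pred0)); last first.
  by move=> i; rewrite mem_iota add0n => /andP[ri _] /=; rewrite ltnNge ri andbF.
by rewrite count_pred0 addn0.
Qed.

Lemma nonroot_card : #|[set x : 'I_n.+1 | P x != None]| = m.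
Proof.
have -> : [set x : 'I_n.+1 | P x != None] = [set vert j | j in [set: 'I_m]].
  apply/setP => x; rewrite inE; apply/idP/imsetP.
    rewrite -lbloP; case E: (lblo x) => [i|] // _.
    exists i; rewrite ?inE //; apply: ord_inj; rewrite vertE; symmetry; exact: lbloS E.
  by case=> j _ ->; exact: vert_nonroot.
rewrite card_imset ?cardsT ?card_ord //.
by move=> i j e; apply: lamI; rewrite -!vertE e.
Qed.

Lemma roots_card : count rt (iota 0 n.+1) = (n - m).+1 /\ m <= n.
Proof.
have A : #|[set x : 'I_n.+1 | P x == None]| + m = n.+1.
  have C1 := cardsC [set x : 'I_n.+1 | P x == None]; rewrite card_ord in C1.
  rewrite -nonroot_card; apply: etrans C1.
  by congr (_ + _); apply: eq_card => x; rewrite !inE.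
have B : 0 < #|[set x : 'I_n.+1 | P x == None]|.
  by apply/card_gt0P; exists ord0; rewrite inE root0.
have -> : count rt (iota 0 n.+1) = #|[set x : 'I_n.+1 | P x == None]|.
  rewrite -/(cnt n.+1) cnt_card //; apply: eq_card => x; rewrite !inE ltn_ord andbT //.
split; lia.
Qed.

Lemma cnt_split a b : a <= b -> cnt b = cnt a + count rt (iota a (b - a)).
Proof. by move=> ab; rewrite /cnt -{1}(subnKC ab) iotaD count_cat. Qed.

Lemma cntS a : cnt a.+1 = cnt a + rt a.
Proof. by rewrite (cnt_split (leqnSn a)) subSnn /= addn0. Qed.

Lemma cnt_mono a b : a <= b -> cnt a <= cnt b.
Proof. by move=> ab; rewrite (cnt_split ab) leq_addr. Qed.

Lemma cnt_lt a b : rt a -> a < b -> cnt a < cnt b.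
Proof.
move=> ra ab; apply: leq_trans (cnt_mono ab); rewrite cntS ra addn1 //.
Qed.

Lemma cnt_root_le v : v <= n -> rt v -> cnt v <= n - m.
Proof.
move=> vn rv; have h1 := cnt_lt rv (ltnSn v); have h2 := cnt_mono (vn : v.+1 <= n.+1).
have [R _] := roots_card; rewrite /cnt in h1 h2 *; lia.
Qed.

Lemma cnt_inj v w : rt v -> rt w -> cnt v = cnt w -> v = w.
Proof.
move=> rv rw e; case: (ltngtP v w) => // vw.
  by have := cnt_lt rv vw; rewrite e ltnn.
by have := cnt_lt rw vw; rewrite e ltnn.
Qed.

Local Notation F := (FC m P C).

Lemma phin_lam (i : 'I_m) : phin (lam C i.+1) = inr i.
Proof. by rewrite /phin lblo_lam. Qed.

Lemma phin_root v : v <= n -> rt v -> phin v = inl (inord (cnt v)).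
Proof.
move=> vn rv; rewrite /phin; case E: (lblo v) => [i|] //.
by have := lblo_rt vn; rewrite E rv.
Qed.

Lemma phin_inr v i : v <= n -> (phin v == inr i) = (v == lam C i.+1).
Proof.
move=> vn; rewrite /phin; case E: (lblo v) => [k|].
  have lk := lbloS E; apply/eqP/eqP => [[<-] //| e].
  by congr inr; apply: lamI; rewrite lk.
apply/esym/negbTE/eqP => e; by rewrite e lblo_lam in E.
Qed.

Lemma phin_inl v rho : v <= n -> rho <= n -> rt rho ->
  (phin v == inl (inord (cnt rho))) = (v == rho).
Proof.
move=> vn rn rr; rewrite /phin; case E: (lblo v) => [k|].
  apply/esym/negbTE/eqP => e; have := lblo_rt rn; by rewrite rr -e E.
have rv : rt v by rewrite -lblo_rt // E.
apply/eqP/eqP => [[] e | -> //].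
apply: cnt_inj => //.
have := congr1 (@nat_of_ord _) e; rewrite !inordK // ltnS; exact: cnt_root_le.
Qed.

Lemma phin_inj v w : v <= n -> w <= n -> phin v = phin w -> v = w.
Proof.
move=> vn wn; case E: (lblo v) => [i|] e.
  have : phin w == inr i by rewrite -e /phin E.
  by rewrite phin_inr // => /eqP ->; rewrite (lbloS E).
have rv : rt v by rewrite -lblo_rt // E.
have : phin w == inl (inord (cnt v)) by rewrite -e phin_root.
by rewrite phin_inl // => /eqP.
Qed.

Definition isl (x : onode n m) : bool := if x is inl _ then true else false.

Lemma isl_phin v : v <= n -> isl (phin v) = rt v.
Proof. by move=> vn; rewrite -lblo_rt // /phin; case: (lblo v). Qed.

Lemma par_le j : par j <= n.
Proof. by rewrite -ltnS ltn_ord. Qed.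

Lemma FCE j : F j = phin (par j).
Proof.
rewrite ffunE /= -/(vert j) -/(par j) /phin.
have hl := lbloP (par j).
rewrite /lamInv -/(lblo (par j)).
case E: (lblo (par j)) hl => [i|] /=; case: (P (par j)) => [p|] //= _.
  by rewrite (valKd j i).
by rewrite cnt_card // ltnW.
Qed.

Lemma minlab_in (x : 'I_m) s : minlab x s \in x :: s.
Proof.
elim: s => [|a s IH] /=; first by rewrite inE.
case: ifP => _; first by rewrite !inE eqxx orbT.
by move: IH; rewrite !inE => /orP[->|->]; rewrite ?orbT.
Qed.

Lemma minlab_le (x : 'I_m) s y : y \in x :: s -> minlab x s <= y.
Proof.
elim: s => [|a s IH] /=; first by rewrite inE => /eqP ->.
rewrite !inE => H.
have H' : (y == a) || (y \in x :: s) by rewrite inE; case/or3P: H => ->; rewrite ?orbT.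
case: ifP => /= h; case/orP: H' => [/eqP-> //| ys].
- by apply: ltnW; apply: leq_trans h (IH ys).
- by rewrite leqNgt h.
- exact: IH.
Qed.

Definition FrontP (rho v : nat) (j : 'I_m) : bool :=
  (rho <= par j < v) && (v <= lam C j.+1).

Lemma ochildren_inr (j0 j : 'I_m) :
  (j \in ochildren F (inr j0)) = (par j == lam C j0.+1 :> nat).
Proof. by rewrite mem_filter mem_enum andbT FCE phin_inr ?par_le. Qed.

Lemma search rho : rho <= n -> rt rho -> forall d v fuel (fr : seq 'I_m),
  rho < v -> d <= fuel ->
  (forall u, v <= u < v + d -> (u <= n) && ~~ rt u) ->
  (v + d = n.+1 \/ (v + d <= n /\ rt (v + d))) ->
  uniq fr -> (forall j, (j \in fr) = FrontP rho v j) ->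
  map (fun j : 'I_m => lam C j.+1) (psearch F fuel fr) = iota v d.
Proof.
move=> rn rr; have Prho : P (inord rho) = None by apply/eqP.
elim=> [|d IH] v fuel fr rv dfuel rng fin ufr mfr.
  have -> : fr = [::].
    case: fr ufr mfr => [//|j fr] _ mfr.
    have := mfr j; rewrite inE eqxx /= => /esym /andP[/andP[_ pv] vl].
    have lj := lam_le j.
    rewrite addn0 in fin; case: fin => [vE | [vn rtv]]; first lia.
    have Pv : P (inord v) = None by apply/eqP.
    have := treeT (Ppar j) Pv; rewrite vertE inordK ?ltnS // => /(_ pv); lia.
  by case: fuel {dfuel}.
case: fuel dfuel => [//|fuel] dfuel.
have /andP[vn nrv] : (v <= n) && ~~ rt v by apply: rng; lia.
case E: (lblo v) => [j0|]; last by move: nrv; rewrite -lblo_rt // E.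
have lj0 := lbloS E.
have Fj0 : FrontP rho v j0.
  rewrite /FrontP lj0 leqnn andbT.
  have := par_lt j0; rewrite lj0 => ->; rewrite andbT leqNgt; apply/negP => prho.
  have := treeT (Ppar j0) Prho; rewrite vertE inordK ?ltnS // => /(_ prho); lia.
have j0fr : j0 \in fr by rewrite mfr.
case: fr ufr mfr j0fr => [//|x s] ufr mfr j0fr.
have yE : minlab x s = j0.
  have yin := minlab_in x s; have yle := minlab_le j0fr.
  move: (yin); rewrite mfr => /andP[/andP[ry pyv] vly].
  case: (eqVneq (minlab x s) j0) => // ne.
  have : lam C (minlab x s).+1 != v.
    by apply: contra ne => /eqP e; apply/eqP; apply: lamI; rewrite e lj0.
  move=> nev; have lt : lam C j0.+1 < lam C (minlab x s).+1 by rewrite lj0; lia.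
  have := order (_ : par (minlab x s) < lam C j0.+1) lt; rewrite lj0 => /(_ pyv).
  lia.
have -> : psearch F fuel.+1 (x :: s) =
    j0 :: psearch F fuel (rem j0 (x :: s) ++ ochildren F (inr j0)) by rewrite /= yE.
rewrite map_cons lj0; congr cons; apply: IH.
- exact: ltnW.
- exact: dfuel.
- by move=> u hu; apply: rng; lia.
- by rewrite addSnnS.
  rewrite cat_uniq rem_uniq // filter_uniq ?enum_uniq // andbT /=.
  apply/hasPn => j; rewrite ochildren_inr lj0 => /eqP pj.
  rewrite (mem_rem_uniq _ ufr) inE /= mfr /FrontP pj; lia.
- move=> j; rewrite mem_cat (mem_rem_uniq _ ufr) inE /= mfr ochildren_inr lj0 /FrontP.
  have -> : (j != j0) = (lam C j.+1 != v).
    by congr negb; apply/eqP/eqP => [-> //| e]; apply: lamI; rewrite e lj0.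
  have := par_lt j; lia.
Qed.

Lemma init_front rho : rho <= n -> rt rho ->
  uniq (ochildren F (inl (inord (cnt rho)))) /\
  forall j, (j \in ochildren F (inl (inord (cnt rho)))) = FrontP rho rho.+1 j.
Proof.
move=> rn rr; split; first by rewrite filter_uniq ?enum_uniq.
move=> j; rewrite mem_filter mem_enum andbT FCE phin_inl ?par_le // /FrontP.
have := par_lt j; lia.
Qed.

Lemma run v : v <= n.+1 -> exists d, [/\ v + d <= n.+1,
  (forall u, v <= u < v + d -> (u <= n) && ~~ rt u) &
  (v + d = n.+1 \/ (v + d <= n /\ rt (v + d)))].
Proof.
move=> vn; move Hk: (n.+1 - v) => k; elim: k v vn Hk => [|k IH] v vn Hk.
  exists 0; rewrite addn0; split; [lia | move=> u; lia | left; lia].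
case rv: (rt v).
  exists 0; rewrite addn0; split; [lia | move=> u; lia | right; split => //; lia].
have h1' : v < n.+1 by lia.
have h2' : n.+1 - v.+1 = k by lia.
have [d [h1 h2 h3]] := IH v.+1 h1' h2'.
exists d.+1; split; first lia.
  move=> u hu; case: (eqVneq u v) => [->|ne]; first by rewrite rv andbT; lia.
  by apply: h2; lia.
by rewrite addnS -addSn.
Qed.

Lemma nonroot_count : count (predC rt) (iota 0 n.+1) = m.
Proof.
have := count_predC rt (iota 0 n.+1); rewrite size_iota.
have [R mn] := roots_card; rewrite R; lia.
Qed.

Lemma d_le_m a d : a.+1 + d <= n.+1 ->
  (forall u, a.+1 <= u < a.+1 + d -> (u <= n) && ~~ rt u) -> d <= m.
Proof.
move=> ad rng.
have e : a.+1 + d + (n.+1 - (a.+1 + d)) = n.+1 by lia.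
have : count (predC rt) (iota 0 (a.+1 + d + (n.+1 - (a.+1 + d)))) = m.
  by rewrite e nonroot_count.
rewrite !iotaD !count_cat.
rewrite (eq_in_count (a1 := predC rt) (a2 := predT) (s := iota (0 + a.+1) d)).
  by rewrite count_predT size_iota; lia.
by move=> u; rewrite mem_iota add0n => hu /=; have /andP[_ ->] := rng u hu.
Qed.

Definition blk (r : nat) : seq (onode n m) :=
  inl (inord (cnt r)) :: map inr (psearch F m (ochildren F (inl (inord (cnt r))))).

Lemma segment a : (a = n.+1 \/ (a <= n /\ rt a)) ->
  flatten [seq blk r | r <- filter rt (iota a (n.+1 - a))] =
  map phin (iota a (n.+1 - a)).
Proof.
have [k] := ubnP (n.+1 - a); elim: k a => [//|k IH] a ka ha.
case: ha => [-> | [an ra]]; first by rewrite subnn.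
have -> : n.+1 - a = (n - a).+1 by lia.
rewrite /= ra /=.
have an' : a.+1 <= n.+1 by lia.
have [d [h1 h2 h3]] := run an'.
have e2 : n - a = d + (n.+1 - (a.+1 + d)) by lia.
rewrite e2 iotaD filter_cat.
rewrite (eq_in_filter (a1 := rt) (a2 := pred0) (s := iota a.+1 d)); last first.
  by move=> u; rewrite mem_iota => hu /=; have /andP[_ /negbTE ->] := h2 u hu.
rewrite filter_pred0 cat0s IH; last 2 first.
- lia.
- exact: h3.
rewrite /blk map_cat phin_root //= -cat_cons; congr (_ :: _ ++ _).
have [uf mf] := init_front an ra.
rewrite -(search an ra (ltnSn a) (d_le_m h1 h2) h2 h3 uf mf).
by rewrite -map_comp; apply: eq_map => j /=; rewrite phin_lam.
Qed.

Lemma map_cnt L : map cnt (filter rt (iota 0 L)) = iota 0 (count rt (iota 0 L)).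
Proof.
elim: L => [//|L IH].
rewrite -(addn1 L) iotaD filter_cat map_cat count_cat IH /= add0n.
case: (rt L) => /=; first by rewrite addn0 iotaD.
by rewrite !addn0 cats0.
Qed.

Lemma enum_eq : enum 'I_(n - m).+1 = [seq inord (cnt r) | r <- filter rt (iota 0 n.+1)].
Proof.
apply: (inj_map val_inj); rewrite val_enum_ord -map_comp.
have -> : [seq (val \o (fun r => inord (cnt r) : 'I_(n - m).+1)) i | i <- filter rt (iota 0 n.+1)]
   = [seq cnt i | i <- filter rt (iota 0 n.+1)].
  apply/eq_in_map => r.
  rewrite mem_filter mem_iota /= => /andP[rr rn].
  by rewrite inordK // ltnS cnt_root_le.
by rewrite map_cnt; have [-> _] := roots_card.
Qed.

Lemma visitF : visit_seq F = map phin (iota 0 n.+1).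
Proof.
rewrite /visit_seq enum_eq -map_comp.
have := segment (or_intror (conj (leq0n n) rt0)); rewrite subn0 => <-.
by [].
Qed.

Lemma oup_phin x : x <= n -> oup F (phin x) = phin (up P (inord x)).
Proof.
move=> xn; case E: (lblo x) => [i|].
  have -> : phin x = inr i by rewrite /phin E.
  have -> : inord x = vert i by apply: ord_inj; rewrite vertE inordK ?ltnS // (lbloS E).
  by rewrite /= FCE /up Ppar.
have rx : rt x by rewrite -lblo_rt // E.
have -> : up P (inord x) = inord x by rewrite /up (eqP rx).
by rewrite inordK ?ltnS // phin_root.
Qed.

Lemma iter_oup k x : x <= n -> iter k (oup F) (phin x) = phin (iter k (up P) (inord x)).
Proof.
move=> xn; elim: k => [|k IH] /=; first by rewrite inordK.
by rewrite IH oup_phin ?inord_val // -ltnS ltn_ord.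
Qed.

Lemma depth y : P (iter m (up P) y) = None.
Proof.
case E: (P (iter m (up P) y)) => [p|] //; exfalso.
have nr : forall i, i <= m -> P (iter i (up P) y) != None.
  move=> i im; apply/negP => /eqP hi.
  have : iter m (up P) y = iter i (up P) y.
    by rewrite -(subnK im) iterD iter_fix // /up hi.
  by move=> e; rewrite e hi in E.
have dec : forall i, i < m -> iter i.+1 (up P) y < iter i (up P) y.
  move=> i im; rewrite iterS; have := nr i (ltnW im); set z := iter i (up P) y.
  by rewrite /up; case E': (P z) => [q|] // _ /=; exact: hP.1 _ _ E'.
have dec2 : forall i j, i < j <= m -> iter j (up P) y < iter i (up P) y.
  move=> i; elim=> [//|j IH] /andP[ij jm].
  case: (eqVneq i j) => [->|ne]; first exact: dec.
  by apply: ltn_trans (dec j jm) (IH _); lia.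
have inj : injective (fun i : 'I_m.+1 => iter i (up P) y).
  move=> i j e; apply: ord_inj; case: (ltngtP i j) => // h.
    by have := dec2 i j; rewrite e ltnn h -ltnS ltn_ord => /(_ isT).
  by have := dec2 j i; rewrite e ltnn h -ltnS ltn_ord => /(_ isT).
have sub : (fun i : 'I_m.+1 => iter i (up P) y) @: setT \subset [set x : 'I_n.+1 | P x != None].
  apply/subsetP => x /imsetP [i _ ->]; rewrite inE; apply: nr; rewrite -ltnS ltn_ord //.
have := subset_leq_card sub; rewrite card_imset // cardsT card_ord nonroot_card ltnn //.
Qed.

Lemma ordF : ordered_forest F.
Proof.
move=> j; rewrite -(phin_lam j) iter_oup ?lam_le //.
set z := iter m (up P) _.
have rz : rt z by rewrite /rt inord_val depth.
by exists (inord (cnt z)); rewrite phin_root // -ltnS ltn_ord.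
Qed.

Lemma trav i : 0 < i <= n -> traversal F i = lamInv C m i.
Proof.
move=> /andP[i0 iN]; rewrite /traversal visitF (nth_map 0) ?size_iota ?ltnS //.
rewrite nth_iota ?ltnS // add0n /phin /lamInv -/(lblo i).
by case: (lblo i).
Qed.

Lemma uniq_phin : uniq (map phin (iota 0 n.+1)).
Proof.
rewrite map_inj_in_uniq ?iota_uniq // => v w; rewrite !mem_iota !add0n !ltnS => /andP[_ vn] /andP[_ wn].
exact: phin_inj.
Qed.

Lemma index_phin p : p <= n -> index (phin p) (map phin (iota 0 n.+1)) = p.
Proof.
move=> pn; have hp : p < size (map phin (iota 0 n.+1)) by rewrite size_map size_iota ltnS.
have := index_uniq (inl ord0) hp uniq_phin.
by rewrite (nth_map 0) ?size_iota ?ltnS // nth_iota ?ltnS // add0n.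
Qed.

Lemma oprioF : oprio F = P.
Proof.
apply/ffunP => v; rewrite ffunE visitF (nth_map 0) ?size_iota ?ltn_ord //.
rewrite nth_iota ?ltn_ord // add0n.
have vn : v <= n by rewrite -ltnS ltn_ord.
case E: (lblo v) => [i|].
  have -> : phin v = inr i by rewrite /phin E.
  rewrite FCE /step visitF index_phin ?par_le // inord_val.
  have -> : v = vert i by apply: ord_inj; rewrite vertE (lbloS E).
  by rewrite Ppar.
have rv : rt v by rewrite -lblo_rt // E.
rewrite phin_root //; apply/esym/eqP; by rewrite -lbloP E.
Qed.

Lemma phin_surj (x : onode n m) : exists2 w, w <= n & phin w = x.
Proof.
case: x => [k|i].
  have : k \in enum 'I_(n - m).+1 by rewrite mem_enum.
  rewrite enum_eq => /mapP [r]; rewrite mem_filter mem_iota add0n ltnS => /andP[rr rn] ->.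
  by exists r => //; rewrite phin_root.
by exists (lam C i.+1); rewrite ?lam_le ?phin_lam.
Qed.

Lemma filter_isl_inr (t : seq 'I_m) : filter isl (map inr t) = [::].
Proof. by elim: t. Qed.

Lemma uniqueG (G : OForest n m) :
  (forall i, 0 < i <= n -> traversal G i = lamInv C m i) -> oprio G = P -> G = F.
Proof.
move=> hT hO; set s := visit_seq G.
have fl : filter isl s = map inl (enum 'I_(n - m).+1).
  rewrite /s /visit_seq filter_flatten -map_comp.
  rewrite (eq_map (g := (fun x => [:: x]) \o inl)); last first.
    by move=> k /=; rewrite filter_isl_inr.
  by rewrite map_comp flatten_seq1.
have cs : count isl s = (n - m).+1 by rewrite -size_filter fl size_map size_enum_ord.
have s0 : nth (inl ord0) s 0 = inl ord0 /\ 0 < size s.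
  by rewrite /s /visit_seq enum_ordSl /=.
have pre : forall i, i <= n.+1 -> i <= size s /\ take i s = map phin (iota 0 i).
  elim=> [|i IH] iN; first by rewrite take0.
  have [isz itk] := IH (ltnW iN); have iN' : i <= n by lia.
  suff [hlt hnth] : i < size s /\ nth (inl ord0) s i = phin i.
    split => //; rewrite (take_nth (inl ord0) hlt) itk hnth.
    have -> : iota 0 i.+1 = rcons (iota 0 i) i by rewrite -cats1 -addn1 iotaD.
    by rewrite map_rcons.
  case E: (lblo i) => [j|].
    have i0 : 0 < i.
      case: i {IH iN isz itk} iN' E => [|//] _ E.
      by have := lblo_rt (leq0n n); rewrite E rt0.
    have := hT i; rewrite i0 iN' /= /traversal /lamInv -/(lblo i) E /= => /(_ isT).
    case Enth: (nth (inl ord0) s i) => [k|j'] // [ej].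
    have hlt : i < size s.
      by rewrite ltnNge; apply/negP => h; rewrite nth_default in Enth.
    split => //; rewrite /phin E; congr inr; exact: ord_inj.
  have ri : rt i by rewrite -lblo_rt // E.
  case: (posnP i) => [i0 | i0].
    rewrite i0; have [-> ->] := s0; split => //.
    rewrite phin_root ?rt0 //; congr inl; apply: ord_inj; rewrite inordK //.
  have := hT i; rewrite i0 iN' /= /traversal /lamInv -/(lblo i) E /= => /(_ isT).
  have ct : count isl (take i s) = cnt i.
    rewrite itk count_map /cnt; apply: eq_in_count => u.
    by rewrite mem_iota add0n => /andP[_ ui] /=; rewrite isl_phin //; lia.
  have cle := cnt_root_le iN' ri.
  have hlt : i < size s.
    rewrite ltnNge; apply/negP => h.
    by move: ct; rewrite take_oversize // cs; lia.
  case Enth: (nth (inl ord0) s i) => [k|j'] // _.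
  split => //.
  have fs : filter isl s = filter isl (take i s) ++ filter isl (drop i s).
    by rewrite -filter_cat cat_take_drop.
  rewrite (drop_nth (inl ord0) hlt) Enth /= fl in fs.
  have := congr1 (fun t => nth (inl ord0) t (cnt i)) fs.
  rewrite nth_cat size_filter ct ltnn subnn /= (nth_map ord0) ?size_enum_ord ?ltnS //.
  move=> [ek]; rewrite phin_root //; congr inl; apply: ord_inj.
  by rewrite -ek nth_enum_ord ?inordK ?ltnS.
have [sz tk] := pre n.+1 (leqnn _).
have nthS : forall v, v <= n -> nth (inl ord0) s v = phin v.
  move=> v vn; rewrite -(nth_take _ (_ : v < n.+1)) ?ltnS // tk.
  by rewrite (nth_map 0) ?size_iota ?ltnS // nth_iota ?ltnS.
apply/ffunP => j; rewrite FCE.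
have hj : nth (inl ord0) s (lam C j.+1) = inr j by rewrite nthS ?lam_le ?phin_lam.
have := congr1 (fun f : Forest n => f (vert j)) hO; rewrite /= ffunE Ppar vertE -/s hj.
case=> st.
have Gin : G j \in take n.+1 s.
  by rewrite tk; have [w wn <-] := phin_surj (G j); apply: map_f; rewrite mem_iota.
have idx : index (G j) s < n.+1.
  rewrite -(cat_take_drop n.+1 s) index_cat Gin.
  by have := Gin; rewrite -index_mem size_takel.
have ie : index (G j) s = par j.
  by have := congr1 (@nat_of_ord _) st; rewrite /step inordK.
by rewrite -(nth_index (inl ord0) (mem_take Gin)) ie nthS ?par_le.
Qed.

End Proof.

Theorem lemma3p2 (n m : nat) (P : Forest n) (C : nat -> Forest n) :
  priority_forest P ->
  #|edges P| = m ->
  max_chain P m C ->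
  [/\ ordered_forest (FC m P C),
      (forall i, 0 < i <= n -> traversal (FC m P C) i = lamInv C m i),
      oprio (FC m P C) = P &
      (forall G : OForest n m,
         ordered_forest G ->
         (forall i, 0 < i <= n -> traversal G i = lamInv C m i) ->
         oprio G = P -> G = FC m P C)].
Proof.
move=> hP _ hC; split.
- exact: (ordF hP hC).
- exact: (trav hP hC).
- exact: (oprioF hP hC).
- by move=> G _ hT hO; exact: (uniqueG hP hC hT hO).
Qed.
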